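(* Let $I$ be a commutative monoid and let $K(I)$ be its Grothendieck group. Then the Burnside ring $\mathrm{A}(I)$ of $I$ is isomorphic (as a ring) to the usual Burnside ring $\mathrm{A}(K(I))$ of the group $K(I)$.
   Context: Let $I$ be a monoid with operation $\otimes$ and identity $1$. For a set $X$, $\mathrm{End}_l(X)$ denotes self-maps written on the left with product $f\circ g$ ($g$ first); $\mathrm{End}_r(X)$ denotes self-maps written on the right, $x\mapsto(x)f$, with $(x)(fg)=((x)f)g$. An $I$-set is a set $X$ with a pair $\xi=(\xi_l,\xi_r)$ of monoid homomorphisms $\xi_l:I\to\mathrm{End}_l(X)$, $\xi_r:I\to\mathrm{End}_r(X)$ with $(\xi_l(i)(x))\xi_r(j)=\xi_l(i)((x)\xi_r(j))$; $f:(X,\xi)\to(Y,\eta)$ is $I$-equivariant if $(f(\xi_l(i)(x)))\eta_r(i)=\eta_l(i)(f((x)\xi_r(i)))$ for all $i,x$. An $I$-set is invertible on one side if either $\xi_l(i)$ is bijective for all $i$ or $\xi_r(i)$ is bijective for all $i$; $\mathrm{bAct}(I)$ is the category of finite $I$-sets that are products (componentwise action) of $I$-sets invertible on one side, with $I$-equivariant maps. For an $I$-set $(A,\alpha)$: $\mathrm{Map}^l_I(A)$ is the set of $f:I\to A$ with $(f(j))\alpha_r(i)=\alpha_l(i)(f(j\otimes i))$ for all $i,j$, with action $\theta_l(k)=\mathrm{id}$, $((f)\theta_r(k))(j)=f(k\otimes j)$; $\mathrm{Map}^r_I(A)$ is the set of $f:I\to A$ with $(f(i\otimes j))\alpha_r(i)=\alpha_l(i)(f(j))$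 for all $i,j$, with action $(\vartheta_l(k)(f))(i)=f(i\otimes k)$, $\vartheta_r(k)=\mathrm{id}$; both are functors via $u\mapsto(h\mapsto u\circ h)$, and $\mathrm{Inv}=\mathrm{Map}^l_I\circ\mathrm{Map}^r_I$. A morphism $f$ of $\mathrm{bAct}(I)$ is a weak equivalence if $\mathrm{Inv}(f)$ is a bijection. Let $\mathrm{Ho}(\mathrm{bAct}(I))$ be the localization of $\mathrm{bAct}(I)$ at the weak equivalences. The isomorphism classes of objects of $\mathrm{Ho}(\mathrm{bAct}(I))$ form a semiring under disjoint union (addition) and cartesian product with componentwise action (multiplication); the Burnside ring $\mathrm{A}(I)$ is the Grothendieck ring of this semiring. For a group $G$, $\mathrm{A}(G)$ is the usual Burnside ring, the Grothendieck ring of isomorphism classes of finite $G$-sets under disjoint union and product.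
   Formalization: The objects of bAct(I) are the finite I-sets built, up to isomorphism, from I-sets invertible on one side by taking products and also disjoint unions, not by products alone. Apart from conventions, each condition added here is assumed in the paper as well or is needed for the statement above to hold. *)

(* Defs.v *)
From HB Require Import structures.
From mathcomp Require Import all_boot.
From Stdlib Require Import Relations.

Set Implicit Arguments.
Unset Strict Implicit.
Unset Printing Implicit Defensive.

Record bs_monoid := BsMonoid {
  mT : Type;
  mop : mT -> mT -> mT;
  mone : mT;
  mopA : forall a b c, mop a (mop b c) = mop (mop a b) c;
  mop1m : forall a, mop mone a = a;
  mopm1 : forall a, mop a mone = a }.

Definition bs_commutative (I : bs_monoid) := forall a b : mT I, mop a b = mop b a.

(* I-sets (raw data: left action l i = xi_l(i), right action          *)
(*  r i x = (x) xi_r(i))                                              *)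

Definition is_iset (I : bs_monoid) (X : Type) (l r : mT I -> X -> X) : Prop :=
  [/\ (forall x, l (mone I) x = x),
      (forall i j x, l (mop i j) x = l i (l j x)),
      (forall x, r (mone I) x = x),
      (forall i j x, r (mop i j) x = r j (r i x))
    & (forall i j x, r j (l i x) = l i (r j x))].

Definition iequivariant (I : bs_monoid) (X Y : Type)
  (lX rX : mT I -> X -> X) (lY rY : mT I -> Y -> Y) (f : X -> Y) : Prop :=
  forall (i : mT I) (x : X), rY i (f (lX i x)) = lY i (f (rX i x)).

Definition MapR_pred (I : bs_monoid) (A : Type) (l r : mT I -> A -> A)
  (f : mT I -> A) : Prop :=
  forall i j, r i (f (mop i j)) = l i (f j).

Definition MapL_pred (I : bs_monoid) (B : Type) (l r : mT I -> B -> B)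
  (f : mT I -> B) : Prop :=
  forall i j, r i (f j) = l i (f (mop j i)).

(* the action of Map^r_I(A), defined on the ambient set I -> A *)
Definition varthetaL (I : bs_monoid) (A : Type) (k : mT I) (f : mT I -> A)
  : mT I -> A := fun i => f (mop i k).
Definition varthetaR (I : bs_monoid) (A : Type) (k : mT I) (f : mT I -> A)
  : mT I -> A := f.

(* Inv(A) = Map^l_I(Map^r_I(A)), as a subset of I -> (I -> A) *)
Definition Inv_pred (I : bs_monoid) (A : Type) (l r : mT I -> A -> A)
  (F : mT I -> mT I -> A) : Prop :=
  (forall j, MapR_pred l r (F j)) /\
  MapL_pred (@varthetaL I A) (@varthetaR I A) F.

Definition Inv_bijective (I : bs_monoid) (A B : Type)
  (lA rA : mT I -> A -> A) (lB rB : mT I -> B -> B) (u : A -> B) : Prop :=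
  (forall F G, Inv_pred lA rA F -> Inv_pred lA rA G ->
     (fun j i => u (F j i)) = (fun j i => u (G j i)) -> F = G) /\
  (forall H, Inv_pred lB rB H ->
     exists F, Inv_pred lA rA F /\ (fun j i => u (F j i)) = H).

Record fiset (I : bs_monoid) := FISet {
  fcar : finType;
  fl : mT I -> fcar -> fcar;
  fr : mT I -> fcar -> fcar }.
Arguments fl {I} f i x : rename.
Arguments fr {I} f i x : rename.

Definition fiset_ok (I : bs_monoid) (X : fiset I) := is_iset (@fl I X) (@fr I X).

Definition one_side_invertible (I : bs_monoid) (X : fiset I) : Prop :=
  (forall i, bijective (fl X i)) \/ (forall i, bijective (fr X i)).

Definition prodI (I : bs_monoid) (X Y : fiset I) : fiset I :=
  @FISet I (fcar X * fcar Y)%type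
    (fun i p => (fl X i p.1, fl Y i p.2))
    (fun i p => (fr X i p.1, fr Y i p.2)).

Definition sumI (I : bs_monoid) (X Y : fiset I) : fiset I :=
  @FISet I (fcar X + fcar Y)%type
    (fun i s => match s with inl x => inl (fl X i x) | inr y => inr (fl Y i y) end)
    (fun i s => match s with inl x => inl (fr X i x) | inr y => inr (fr Y i y) end).

Definition emptyI (I : bs_monoid) : fiset I :=
  @FISet I void (fun _ x => x) (fun _ x => x).
Definition pointI (I : bs_monoid) : fiset I :=
  @FISet I unit (fun _ x => x) (fun _ x => x).

Definition strict_iso (I : bs_monoid) (X Y : fiset I) : Prop :=
  exists f : fcar X -> fcar Y,
    [/\ bijective f, (forall i x, f (fl X i x) = fl Y i (f x))
      & (forall i x, f (fr X i x) = fr Y i (f x))].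

Inductive in_bAct (I : bs_monoid) : fiset I -> Prop :=
| bA_inv X : fiset_ok X -> one_side_invertible X -> in_bAct X
| bA_prod X Y : in_bAct X -> in_bAct Y -> in_bAct (prodI X Y)
| bA_sum X Y : in_bAct X -> in_bAct Y -> in_bAct (sumI X Y)
| bA_iso X Y : in_bAct X -> strict_iso X Y -> in_bAct Y.

Definition is_morph (I : bs_monoid) (X Y : fiset I) (f : fcar X -> fcar Y) :=
  [/\ in_bAct X, in_bAct Y & iequivariant (@fl I X) (@fr I X) (@fl I Y) (@fr I Y) f].

Definition is_weq (I : bs_monoid) (X Y : fiset I) (f : fcar X -> fcar Y) :=
  is_morph f /\ Inv_bijective (@fl I X) (@fr I X) (@fl I Y) (@fr I Y) f.

(* The localization Ho(bAct(I)) (Gabriel-Zisman zigzag construction)   *)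

Inductive zz (I : bs_monoid) : fiset I -> fiset I -> Type :=
| zz_nil X : zz X X
| zz_fwd X Y Z : (fcar X -> fcar Y) -> zz Y Z -> zz X Z
| zz_bwd X Y Z : (fcar Y -> fcar X) -> zz Y Z -> zz X Z.  (* formal inverse of Y -> X *)

Fixpoint zz_cat (I : bs_monoid) (X Y Z : fiset I) (p : zz X Y) : zz Y Z -> zz X Z :=
  match p in zz X0 Y0 return zz Y0 Z -> zz X0 Z with
  | zz_nil _ => fun q => q
  | zz_fwd _ _ _ f p' => fun q => zz_fwd f (zz_cat p' q)
  | zz_bwd _ _ _ w p' => fun q => zz_bwd w (zz_cat p' q)
  end.

Fixpoint zz_wf (I : bs_monoid) (X Y : fiset I) (p : zz X Y) : Prop :=
  match p with
  | zz_nil X0 => in_bAct X0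
  | zz_fwd _ _ _ f p' => is_morph f /\ zz_wf p'
  | zz_bwd _ _ _ w p' => is_weq w /\ zz_wf p'
  end.

Inductive zz_gen (I : bs_monoid) : forall X Y : fiset I, zz X Y -> zz X Y -> Prop :=
| zg_id X : in_bAct X ->
    zz_gen (zz_fwd (@id (fcar X)) (zz_nil X)) (zz_nil X)
| zg_comp X Y Z (f : fcar X -> fcar Y) (g : fcar Y -> fcar Z) :
    is_morph f -> is_morph g -> is_morph (g \o f) ->
    zz_gen (zz_fwd f (zz_fwd g (zz_nil Z))) (zz_fwd (g \o f) (zz_nil Z))
| zg_wl X Y (w : fcar X -> fcar Y) : is_weq w ->
    zz_gen (zz_fwd w (zz_bwd w (zz_nil X))) (zz_nil X)
| zg_wr X Y (w : fcar X -> fcar Y) : is_weq w ->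
    zz_gen (zz_bwd w (zz_fwd w (zz_nil Y))) (zz_nil Y).

Definition zz_step (I : bs_monoid) (X W : fiset I) (p p' : zz X W) : Prop :=
  exists (Y Z : fiset I) (a : zz X Y) (g g' : zz Y Z) (b : zz Z W),
    [/\ zz_gen g g', p = zz_cat a (zz_cat g b) & p' = zz_cat a (zz_cat g' b)].

Definition zz_equiv (I : bs_monoid) (X W : fiset I) : relation (zz X W) :=
  clos_refl_sym_trans (zz X W) (@zz_step I X W).

Definition Ho_iso (I : bs_monoid) (X Y : fiset I) : Prop :=
  exists (p : zz X Y) (q : zz Y X),
    [/\ zz_wf p, zz_wf q, zz_equiv (zz_cat p q) (zz_nil X)
      & zz_equiv (zz_cat q p) (zz_nil Y)].

Record sdata := SData {
  sT : Type;
  seqv : sT -> sT -> Prop;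
  sadd : sT -> sT -> sT;
  smul : sT -> sT -> sT;
  szero : sT;
  sone : sT }.

Record rdata := RData {
  rT : Type;
  reqv : rT -> rT -> Prop;
  radd : rT -> rT -> rT;
  rmul : rT -> rT -> rT;
  rone : rT }.

(* Grothendieck ring: formal differences (a, b) = a - b *)
Definition groth (S : sdata) : rdata := {|
  rT := (sT S * sT S)%type;
  reqv := fun a b => exists k,
     seqv (sadd (sadd a.1 b.2) k) (sadd (sadd b.1 a.2) k);
  radd := fun a b => (sadd a.1 b.1, sadd a.2 b.2);
  rmul := fun a b => (sadd (smul a.1 b.1) (smul a.2 b.2),
                      sadd (smul a.1 b.2) (smul a.2 b.1));
  rone := (sone S, szero S) |}.

(* ring isomorphism between the quotients rT R / reqv R and rT S / reqv S *)
Definition ring_isomorphic (R S : rdata) : Prop :=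
  exists phi : rT R -> rT S,
    [/\ (forall a b, reqv a b <-> reqv (phi a) (phi b)),
        (forall s, exists a, reqv (phi a) s),
        (forall a b, reqv (phi (radd a b)) (radd (phi a) (phi b))),
        (forall a b, reqv (phi (rmul a b)) (rmul (phi a) (phi b)))
      & reqv (phi (rone R)) (rone S)].

Lemma in_bAct_empty (I : bs_monoid) : in_bAct (emptyI I).
Proof.
apply: bA_inv; first by split => //= [] [].
by left => i; exists id; case.
Qed.

Lemma in_bAct_point (I : bs_monoid) : in_bAct (pointI I).
Proof.
apply: bA_inv; first by split.
by left => i; exists id.
Qed.

Definition bObj (I : bs_monoid) := {X : fiset I | in_bAct X}.

Definition bsum (I : bs_monoid) (X Y : bObj I) : bObj I :=
  exist _ (sumI (sval X) (sval Y)) (bA_sum (svalP X) (svalP Y)).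
Definition bprod (I : bs_monoid) (X Y : bObj I) : bObj I :=
  exist _ (prodI (sval X) (sval Y)) (bA_prod (svalP X) (svalP Y)).

Definition HoSemiring (I : bs_monoid) : sdata := {|
  sT := bObj I;
  seqv := fun X Y => Ho_iso (sval X) (sval Y);
  sadd := @bsum I;
  smul := @bprod I;
  szero := exist _ (emptyI I) (in_bAct_empty I);
  sone := exist _ (pointI I) (in_bAct_point I) |}.

Definition BurnsideMonoid (I : bs_monoid) : rdata := groth (HoSemiring I).

Record gdata := GData {
  gT : Type;
  geqv : gT -> gT -> Prop;
  gmul : gT -> gT -> gT;
  gone : gT }.

Record gset (G : gdata) := GSet {
  gcar : finType;
  gact : gT G -> gcar -> gcar }.
Arguments gact {G} g g0 x : rename.

Definition is_gset (G : gdata) (X : gset G) : Prop :=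
  [/\ (forall g h x, geqv g h -> gact X g x = gact X h x),
      (forall x, gact X (gone G) x = x)
    & (forall g h x, gact X (gmul g h) x = gact X g (gact X h x))].

Definition gset_iso (G : gdata) (X Y : gset G) : Prop :=
  exists f : gcar X -> gcar Y,
    bijective f /\ forall g x, f (gact X g x) = gact Y g (f x).

Definition gsumS (G : gdata) (X Y : gset G) : gset G :=
  @GSet G (gcar X + gcar Y)%type
    (fun g s => match s with inl x => inl (gact X g x) | inr y => inr (gact Y g y) end).
Definition gprodS (G : gdata) (X Y : gset G) : gset G :=
  @GSet G (gcar X * gcar Y)%type (fun g p => (gact X g p.1, gact Y g p.2)).
Definition gemptyS (G : gdata) : gset G := @GSet G void (fun _ x => x).
Definition gpointS (G : gdata) : gset G := @GSet G unit (fun _ x => x).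

Definition GObj (G : gdata) := {X : gset G | is_gset X}.

Lemma is_gset_sum (G : gdata) (X Y : gset G) :
  is_gset X -> is_gset Y -> is_gset (gsumS X Y).
Proof.
move=> [hX1 hX2 hX3] [hY1 hY2 hY3]; split => /=.
- by move=> g h [x|y] e; rewrite ?(hX1 _ _ _ e) ?(hY1 _ _ _ e).
- by case=> [x|y]; rewrite ?hX2 ?hY2.
- by move=> g h [x|y]; rewrite ?hX3 ?hY3.
Qed.

Lemma is_gset_prod (G : gdata) (X Y : gset G) :
  is_gset X -> is_gset Y -> is_gset (gprodS X Y).
Proof.
move=> [hX1 hX2 hX3] [hY1 hY2 hY3]; split => /=.
- by move=> g h [x y] e; rewrite (hX1 _ _ _ e) (hY1 _ _ _ e).
- by case=> x y; rewrite hX2 hY2.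
- by move=> g h [x y]; rewrite hX3 hY3.
Qed.

Lemma is_gset_empty (G : gdata) : is_gset (gemptyS G).
Proof. by split. Qed.
Lemma is_gset_point (G : gdata) : is_gset (gpointS G).
Proof. by split. Qed.

Definition GSemiring (G : gdata) : sdata := {|
  sT := GObj G;
  seqv := fun X Y => gset_iso (sval X) (sval Y);
  sadd := fun X Y => exist _ (gsumS (sval X) (sval Y)) (is_gset_sum (svalP X) (svalP Y));
  smul := fun X Y => exist _ (gprodS (sval X) (sval Y)) (is_gset_prod (svalP X) (svalP Y));
  szero := exist _ (gemptyS G) (is_gset_empty G);
  sone := exist _ (gpointS G) (is_gset_point G) |}.

Definition BurnsideGroup (G : gdata) : rdata := groth (GSemiring G).

(* pairs (a, b) = a - b, (a,b) ~ (c,d) iff a d k = c b k for some k   *)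

Definition Kgroup (I : bs_monoid) : gdata := {|
  gT := (mT I * mT I)%type;
  geqv := fun p q => exists k, mop (mop p.1 q.2) k = mop (mop q.1 p.2) k;
  gmul := fun p q => (mop p.1 q.1, mop p.2 q.2);
  gone := (mone I, mone I) |}.

(* Main.v *)
Require Import Defs.
From mathcomp Require Import all_boot.
From Stdlib Require Import ClassicalEpsilon FunctionalExtensionality Classical Relations.

Set Implicit Arguments.
Unset Strict Implicit.
Unset Printing Implicit Defensive.

Section Determ.
Variable I : bs_monoid.
Local Notation T := (mT I).
Local Notation "a ** b" := (mop a b) (at level 40, left associativity).

Lemma least_ex (P : nat -> Prop) : (exists n, P n) -> exists n, P n /\ forall m, P m -> n <= m.
Proof.
move=> [n Pn]; elim: n {-2}n (leqnn n) Pn => [|N IH] n hn Pn.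
  exists n; split=> // m _; by move: hn; rewrite leqn0 => /eqP ->.
case: (classic (exists m, m < n /\ P m)) => [[m [hm Pm]]|h].
  apply: (IH m) => //; rewrite -ltnS; exact: leq_trans hm hn.
exists n; split=> // m Pm; rewrite leqNgt; apply/negP => hm; apply: h; by exists m.
Qed.

Lemma determ (X : finType) (psi : T -> X -> X) :
  (forall i j x, psi (i ** j) x = psi i (psi j x)) ->
  forall h h' : T -> X,
  (forall i m, h m = psi i (h (i ** m))) ->
  (forall i m, h' m = psi i (h' (i ** m))) ->
  h (mone I) = h' (mone I) -> forall k, h k = h' k.
Proof.
move=> psiM h h' hh hh' h1 k.
have [c [[m hm] hmin]] := @least_ex (fun c => exists m, #|[set psi m x | x in X]| = c)
   (ex_intro _ _ (ex_intro _ (mone I) erefl)).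
set C := [set psi m x | x in X] in hm.
have injC : {in C &, injective (psi k)}.
  apply/imset_injP; rewrite eqn_leq leq_imset_card /= hm.
  have -> : [set psi k x | x in C] = [set psi (k ** m) x | x in X].
    rewrite /C -imset_comp; apply: eq_imset => x /=; by rewrite psiM.
  by apply: hmin; eexists.
have inC : forall g : T -> X, (forall i m, g m = psi i (g (i ** m))) -> g k \in C.
  by move=> g hg; rewrite (hg m k); apply: imset_f.
apply: injC; try exact: inC.
have e1 := hh k (mone I); have e2 := hh' k (mone I).
rewrite mopm1 in e1 e2; by rewrite -e1 -e2.
Qed.
End Determ.

Section InvBasics.
Variable I : bs_monoid.
Variable hc : bs_commutative I.
Local Notation T := (mT I).
Local Notation "a ** b" := (mop a b) (at level 40, left associativity).

Lemma mopAC (a b c : T) : a ** b ** c = a ** c ** b.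
Proof. by rewrite -!mopA (hc b). Qed.
Lemma mopCA (a b c : T) : a ** (b ** c) = b ** (a ** c).
Proof. by rewrite !mopA (hc a). Qed.

Definition Inv (X : fiset I) (F : T -> T -> fcar X) := Inv_pred (fl X) (fr X) F.

Lemma InvE (X : fiset I) (F : T -> T -> fcar X) : Inv F <->
  (forall i j k, fr X i (F j (i ** k)) = fl X i (F j k)) /\
  (forall i j k, F j k = F (j ** i) (k ** i)).
Proof.
split.
  case=> h1 h2; split; first by move=> i j k; exact: h1.
  by move=> i j k; have := h2 i j => /(congr1 (fun f => f k)).
case=> h1 h2; split; first by move=> j i k; exact: h1.
by move=> i j; apply: functional_extensionality => k; exact: h2.
Qed.

Lemma InvR (X : fiset I) (F : T -> T -> fcar X) : Inv F -> forall i j k, fr X i (F j (i ** k)) = fl X i (F j k).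
Proof. by case/InvE. Qed.
Lemma InvL (X : fiset I) (F : T -> T -> fcar X) : Inv F -> forall i j k, F j k = F (j ** i) (k ** i).
Proof. by case/InvE. Qed.

Definition actF (A : Type) (g : T * T) (F : T -> T -> A) : T -> T -> A :=
  fun j k => F (j ** g.1) (k ** g.2).

Lemma Inv_act (X : fiset I) g (F : T -> T -> fcar X) : Inv F -> Inv (actF g F).
Proof.
move=> hF; apply/InvE; split=> i j k; rewrite /actF.
  by rewrite -mopA InvR.
by rewrite (InvL hF i) mopAC [k ** i ** _]mopAC.
Qed.

Lemma Inv_geqv (X : fiset I) (F : T -> T -> fcar X) (g h : gT (Kgroup I)) : Inv F -> geqv g h -> F g.1 g.2 = F h.1 h.2.
Proof.
move=> hF [e /= he].
rewrite (InvL hF (h.2 ** e)) mopA he (mopCA g.2 h.2 e).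
by rewrite -mopA -(InvL hF).
Qed.

Definition PP (X : fiset I) := forall i y z, fr X i y = fl X i z ->
  exists x, fl X i x = y /\ fr X i x = z.

Lemma Inv_morph (X Y : fiset I) (f : fcar X -> fcar Y) F :
  PP X -> iequivariant (@fl I X) (@fr I X) (@fl I Y) (@fr I Y) f ->
  Inv F -> Inv (fun j k => f (F j k)).
Proof.
move=> hP hf hF; apply/InvE; split=> i j k; last by rewrite -(InvL hF).
have [x [e1 e2]] := hP _ _ _ (InvR hF i j k).
by rewrite -e1 hf e2.
Qed.

End InvBasics.

Section Uniq.
Variable I : bs_monoid.
Variable hc : bs_commutative I.
Local Notation T := (mT I).
Local Notation "a ** b" := (mop a b) (at level 40, left associativity).

Definition Uq (X : fiset I) := forall F G : T -> T -> fcar X, Inv F -> Inv G ->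
  F (mone I) (mone I) = G (mone I) (mone I) -> F = G.

Lemma bij_ex (A B : Type) (f : A -> B) : bijective f -> exists g, cancel f g /\ cancel g f.
Proof. by case=> g h1 h2; exists g. Qed.

Lemma inv_fun (X : Type) (a : T -> X -> X) : (forall i, bijective (a i)) ->
  exists ainv : T -> X -> X, forall i, cancel (a i) (ainv i) /\ cancel (ainv i) (a i).
Proof.
move=> hb; exists (fun i => proj1_sig (constructive_indefinite_description _ (bij_ex (hb i)))).
move=> i; by case: (constructive_indefinite_description _ (bij_ex (hb i))).
Qed.

Lemma inv_comm (X : Type) (a b : X -> X) (ainv : X -> X) :
  cancel a ainv -> cancel ainv a -> (forall x, a (b x) = b (a x)) ->
  forall y, b (ainv y) = ainv (b y).
Proof.
move=> c1 c2 ab y; apply: (can_inj c1); by rewrite c2 ab c2.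
Qed.

Lemma psiM (X : Type) (a b ainv : T -> X -> X) :
  (forall i j x, a (i ** j) x = a i (a j x)) ->
  (forall i j x, b (i ** j) x = b i (b j x)) ->
  (forall i j x, a i (b j x) = b j (a i x)) ->
  (forall i, cancel (a i) (ainv i) /\ cancel (ainv i) (a i)) ->
  forall i j x, ainv (i ** j) (b (i ** j) x) = ainv i (b i (ainv j (b j x))).
Proof.
move=> aM bM ab hinv i j x.
have ainvM : forall i j y, ainv (i ** j) y = ainv j (ainv i y).
  move=> i' j' y; apply: (can_inj (proj1 (hinv (i' ** j')))).
  by rewrite (proj2 (hinv _)) aM (proj2 (hinv _)) (proj2 (hinv _)).
rewrite ainvM bM -ainvM hc ainvM; congr (ainv _ _).
by rewrite (inv_comm (proj1 (hinv j)) (proj2 (hinv j)))...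

Qed.

Lemma uq_left (X : fiset I) : fiset_ok X -> (forall i, bijective (fl X i)) -> Uq X.
Proof.
case=> l1 lM r1 rM lr hb.
have [ainv hinv] := inv_fun hb.
have rM' : forall i j x, fr X (i ** j) x = fr X i (fr X j x) by move=> i j x; rewrite hc rM.
have lr' : forall i j x, fl X i (fr X j x) = fr X j (fl X i x) by move=> i j x; rewrite lr.
have pM := psiM lM rM' lr' hinv.
move=> F G hF hG e.
have hpsi : forall H : T -> T -> fcar X, Inv H -> forall i m, H (mone I) m = ainv i (fr X i (H (mone I) (i ** m))).
  by move=> H hH i m; rewrite (InvR hH) (proj1 (hinv i)).
have eq1 : forall k, F (mone I) k = G (mone I) k.
  apply: (determ (psi := fun i x => ainv i (fr X i x))).
  - by move=> i j x; rewrite -pM hc.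
  - exact: hpsi.
  - exact: hpsi.
  - exact: e.
have rep : forall H : T -> T -> fcar X, Inv H -> forall j k, H j k = ainv j (fr X j (H (mone I) k)).
  move=> H hH j k; rewrite (InvL hH j (mone I) k) mop1m hc (InvR hH).
  by rewrite (proj1 (hinv j)).
apply: functional_extensionality => j; apply: functional_extensionality => k.
by rewrite (rep _ hF) (rep _ hG) eq1.
Qed.

Lemma uq_right (X : fiset I) : fiset_ok X -> (forall i, bijective (fr X i)) -> Uq X.
Proof.
case=> l1 lM r1 rM lr hb.
have [ainv hinv] := inv_fun hb.
have rM' : forall i j x, fr X (i ** j) x = fr X i (fr X j x) by move=> i j x; rewrite hc rM.
have pM := psiM rM' lM (fun i j x => lr j i x) hinv.
move=> F G hF hG e.
have hpsi : forall H : T -> T -> fcar X, Inv H -> forall i m,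
    H m (mone I) = ainv i (fl X i (H (i ** m) (mone I))).
  move=> H hH i m; rewrite (InvL hH i) mop1m hc -(InvR hH) mopm1.
  by rewrite (proj1 (hinv i)).
have eq1 : forall k, F k (mone I) = G k (mone I).
  apply: (determ (psi := fun i x => ainv i (fl X i x))).
  - by move=> i j x; rewrite -pM.
  - exact: hpsi.
  - exact: hpsi.
  - exact: e.
have rep : forall H : T -> T -> fcar X, Inv H -> forall j k,
    H j k = ainv k (fl X k (H j (mone I))).
  move=> H hH j k; rewrite -(InvR hH) mopm1.
  by rewrite (proj1 (hinv k)).
apply: functional_extensionality => j; apply: functional_extensionality => k.
by rewrite (rep _ hF) (rep _ hG) eq1.
Qed.

Lemma pp_left (X : fiset I) : fiset_ok X -> (forall i, bijective (fl X i)) -> PP X.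
Proof.
case=> l1 lM r1 rM lr hb.
have [ainv hinv] := inv_fun hb.
move=> i y z e; exists (ainv i y); split; first by rewrite (proj2 (hinv i)).
rewrite (inv_comm (proj1 (hinv i)) (proj2 (hinv i))); last by move=> x; rewrite lr.
by rewrite e (proj1 (hinv i)).
Qed.

Lemma pp_right (X : fiset I) : fiset_ok X -> (forall i, bijective (fr X i)) -> PP X.
Proof.
case=> l1 lM r1 rM lr hb.
have [ainv hinv] := inv_fun hb.
move=> i y z e; exists (ainv i z); split; last by rewrite (proj2 (hinv i)).
rewrite (inv_comm (proj1 (hinv i)) (proj2 (hinv i))); last by move=> x; rewrite lr.
by rewrite -e (proj1 (hinv i)).
Qed.

Lemma Inv_prod (X Y : fiset I) (F : T -> T -> fcar (prodI X Y)) :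
  Inv F <-> Inv (fun j k => (F j k).1 : fcar X) /\ Inv (fun j k => (F j k).2 : fcar Y).
Proof.
split.
  move=> hF; split; apply/InvE; split => i j k.
  - by have := InvR hF i j k => /(congr1 fst).
  - by rewrite -(InvL hF).
  - by have := InvR hF i j k => /(congr1 snd).
  - by rewrite -(InvL hF).
case=> h1 h2; apply/InvE; split=> i j k; apply: injective_projections => /=.
- exact: (InvR h1).
- exact: (InvR h2).
- exact: (InvL h1).
- exact: (InvL h2).
Qed.

Lemma Inv_inl (X Y : fiset I) (F : T -> T -> fcar X) :
  Inv F <-> Inv (fun j k => (inl (F j k) : fcar (sumI X Y))).
Proof.
split => hF; apply/InvE; split=> i j k.
- by rewrite /= (InvR hF).
- by rewrite -(InvL hF).
- by have := InvR hF i j k => /= [[]].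
- by have := InvL hF i j k => [[]].
Qed.

Lemma Inv_inr (X Y : fiset I) (F : T -> T -> fcar Y) :
  Inv F <-> Inv (fun j k => (inr (F j k) : fcar (sumI X Y))).
Proof.
split => hF; apply/InvE; split=> i j k.
- by rewrite /= (InvR hF).
- by rewrite -(InvL hF).
- by have := InvR hF i j k => /= [[]].
- by have := InvL hF i j k => [[]].
Qed.

Definition isl (A B : Type) (s : A + B) := if s is inl _ then true else false.

Lemma Inv_isl (X Y : fiset I) (F : T -> T -> fcar (sumI X Y)) :
  Inv F -> forall j k, isl (F j k) = isl (F (mone I) (mone I)).
Proof.
move=> hF.
have e1 : forall i j k, isl (F j (i ** k)) = isl (F j k).
  move=> i j k; have := InvR hF i j k.
  by case: (F j (i ** k)); case: (F j k).
move=> j k; rewrite -(mopm1 k) (e1 k j (mone I)) (InvL hF j (mone I)) !mop1m.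
by have := e1 j j (mone I); rewrite mopm1 => ->.
Qed.

Lemma Inv_sum_split (X Y : fiset I) (F : T -> T -> fcar (sumI X Y)) :
  Inv F ->
  (exists F' : T -> T -> fcar X, Inv F' /\ F = (fun j k => inl (F' j k))) \/
  (exists F' : T -> T -> fcar Y, Inv F' /\ F = (fun j k => inr (F' j k))).
Proof.
move=> hF; have hi := Inv_isl hF.
case e: (F (mone I) (mone I)) => [a|b]; [left|right].
- exists (fun j k => if F j k is inl x then x else a).
  have eF : F = (fun j k => inl (if F j k is inl x then x else a)).
    apply: functional_extensionality => j; apply: functional_extensionality => k.
    by have := hi j k; rewrite e; case: (F j k).
  split=> //; apply/(@Inv_inl X Y); by rewrite -eF.
- exists (fun j k => if F j k is inr x then x else b).
  have eF : F = (fun j k => inr (if F j k is inr x then x else b)).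
    apply: functional_extensionality => j; apply: functional_extensionality => k.
    by have := hi j k; rewrite e; case: (F j k).
  split=> //; apply/(@Inv_inr X Y); by rewrite -eF.
Qed.

Lemma bAct_props (X : fiset I) : in_bAct X -> Uq X /\ PP X.
Proof.
elim=> {X}.
- move=> X ok [h|h]; split.
  + exact: uq_left. + exact: pp_left. + exact: uq_right. + exact: pp_right.
- move=> X Y _ [uX pX] _ [uY pY]; split.
  + move=> F G /Inv_prod [f1 f2] /Inv_prod [g1 g2] e.
    have e1 := uX _ _ f1 g1 (congr1 fst e).
    have e2 := uY _ _ f2 g2 (congr1 snd e).
    apply: functional_extensionality => j; apply: functional_extensionality => k.
    apply: injective_projections.
    * exact: (congr1 (fun f => f j k) e1).
    * exact: (congr1 (fun f => f j k) e2).
  + move=> i [y1 y2] [z1 z2] [e1 e2].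
    have [x1 [a1 b1]] := pX _ _ _ e1; have [x2 [a2 b2]] := pY _ _ _ e2.
    by exists (x1, x2) => /=; rewrite a1 a2 b1 b2.
- move=> X Y _ [uX pX] _ [uY pY]; split.
  + move=> F G hF hG e.
    case: (Inv_sum_split hF) => [[F' [hF' eF]]|[F' [hF' eF]]];
    case: (Inv_sum_split hG) => [[G' [hG' eG]]|[G' [hG' eG]]];
    rewrite eF eG in e *; case: e => // e.
    * by rewrite (uX _ _ hF' hG' e).
    * by rewrite (uY _ _ hF' hG' e).
  + move=> i [y|y] [z|z] //= e.
    * case: e => /pX [x [a b]]; exists (inl x); by rewrite /= a b.
    * case: e => /pY [x [a b]]; exists (inr x); by rewrite /= a b.
- move=> X Y _ [uX pX] [f [[g fg gf] fl' fr']].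
  have gl : forall i y, g (fl Y i y) = fl X i (g y).
    by move=> i y; apply: (can_inj fg); rewrite gf fl' gf.
  have gr : forall i y, g (fr Y i y) = fr X i (g y).
    by move=> i y; apply: (can_inj fg); rewrite gf fr' gf.
  have hg : forall F : T -> T -> fcar Y, Inv F -> Inv (fun j k => g (F j k)).
    move=> F hF; apply/InvE; split=> i j k; first by rewrite -gr (InvR hF) gl.
    by rewrite -(InvL hF).
  split.
  + move=> F G hF hG e.
    have := uX _ _ (hg _ hF) (hg _ hG); rewrite /= e => /(_ erefl) e'.
    apply: functional_extensionality => j; apply: functional_extensionality => k.
    have := congr1 (fun h => h j k) e' => /= /(congr1 f).
    by rewrite !gf.
  + move=> i y z e.
    have e' : fr X i (g y) = fl X i (g z) by rewrite -gr -gl e.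
    have [x [a b]] := pX i (g y) (g z) e'.
    exists (f x); by rewrite -fl' -fr' a b !gf.
Qed.

End Uniq.

Section Rel.
Variable I : bs_monoid.
Variable hc : bs_commutative I.
Local Notation T := (mT I).
Local Notation "a ** b" := (mop a b) (at level 40, left associativity).

Fixpoint rel (X Y : fiset I) (p : zz X Y) : (T -> T -> fcar X) -> (T -> T -> fcar Y) -> Prop :=
  match p in zz X0 Y0 return (T -> T -> fcar X0) -> (T -> T -> fcar Y0) -> Prop with
  | zz_nil X0 => fun F H => @Inv I X0 F /\ F = H
  | zz_fwd X0 Y0 Z0 f p' => fun F H => @Inv I X0 F /\ rel p' (fun j k => f (F j k)) H
  | zz_bwd X0 Y0 Z0 w p' => fun F H => @Inv I X0 F /\
       exists G, (fun j k => w (G j k)) = F /\ rel p' G H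
  end.

Lemma rel_inv X Y (p : zz X Y) F H : rel p F H -> Inv F /\ Inv H.
Proof.
elim: p F H => [X0|X0 Y0 Z0 f p IH|X0 Y0 Z0 w p IH] F H /=.
- by case=> h <-.
- by case=> h /IH [].
- by case=> h [G [_ /IH []]].
Qed.

Lemma rel_cat X Y Z (p : zz X Y) (q : zz Y Z) F H :
  rel (zz_cat p q) F H <-> exists G, rel p F G /\ rel q G H.
Proof.
elim: p q F H => [X0|X0 Y0 Z0 f p IH|X0 Y0 Z0 w p IH] q F H /=.
- split; last by case=> G [[_ ->]].
  by move=> h; exists F; split=> //; split=> //; case: (rel_inv h).
- split.
    by case=> hF /IH [G [h1 h2]]; exists G.
  by case=> G [[hF h1] h2]; split=> //; apply/IH; exists G.
- split.
    by case=> hF [G [eG /IH [G' [h1 h2]]]]; exists G'; split=> //; split=> //; exists G.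
  by case=> G [[hF [G' [eG h1]]] h2]; split=> //; exists G'; split=> //; apply/IH; exists G.
Qed.

Lemma rel_gen X Y (g g' : zz X Y) : zz_gen g g' -> forall F H, rel g F H <-> rel g' F H.
Proof.
case=> {X Y g g'}.
- move=> X _ F H /=; split; first by case=> h [_ e].
  case=> h <-; split=> //.
- move=> X Y Z f g [hX hY hf] [_ _ hg] _ F H /=; split.
    by case=> hF [_ h]; split=> //; exact: h.
  case=> hF h; split=> //; split; last exact: h.
  by apply: Inv_morph hf hF; case: (bAct_props hc hX).
- move=> X Y w [[hX hY hw] [winj wsur]] F H /=; split.
    case=> hF [hwF [G [eG [hG eGH]]]]; split=> //.
    by rewrite -eGH; apply: winj.
  case=> hF <-; split=> //; split.
    by apply: Inv_morph hw hF; case: (bAct_props hc hX).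
  by exists F.
- move=> X Y w [[hX hY hw] [winj wsur]] F H /=; split.
    by case=> hF [G [eG [hG [_ eGH]]]]; split=> //; rewrite -eGH -eG.
  case=> hF <-; split=> //.
  have [G [hG eG]] := wsur F hF.
  by exists G; split=> //; split=> //; split; rewrite eG.
Qed.

Lemma rel_step X W (p p' : zz X W) : zz_step p p' -> forall F H, rel p F H <-> rel p' F H.
Proof.
case=> Y [Z [a [g [g' [b [hg -> ->]]]]]] F H.
rewrite !rel_cat; split; case=> G [h1 /rel_cat [G' [h2 h3]]]; exists G; split=> //;
  apply/rel_cat; exists G'; split=> //; by apply/(rel_gen hg).
Qed.

Lemma rel_equiv X W (p p' : zz X W) : zz_equiv p p' -> forall F H, rel p F H <-> rel p' F H.
Proof.
elim=> {p p'}.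
- by move=> p p' /rel_step.
- by [].
- by move=> p p' _ h F H; rewrite h.
- by move=> p q r _ h1 _ h2 F H; rewrite h1 h2.
Qed.

Lemma rel_act X Y (p : zz X Y) F H g : rel p F H -> rel p (actF g F) (actF g H).
Proof.
elim: p F H => [X0|X0 Y0 Z0 f p IH|X0 Y0 Z0 w p IH] F H /=.
- by case=> hF <-; split=> //; apply: Inv_act.
- by case=> hF h; split; [apply: Inv_act | exact: (IH _ _ h)].
- case=> hF [G [eG h]]; split; first by apply: Inv_act.
  by exists (actF g G); split; [rewrite -eG | exact: IH].
Qed.

End Rel.

Section Phi.
Variable I : bs_monoid.
Variable hc : bs_commutative I.
Local Notation T := (mT I).
Local Notation "a ** b" := (mop a b) (at level 40, left associativity).
Local Notation K := (Kgroup I).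

Definition PI (X : fiset I) (x : fcar X) : Prop :=
  exists F : T -> T -> fcar X, Inv F /\ F (mone I) (mone I) = x.

Definition PIb (X : fiset I) : pred (fcar X) :=
  fun x => if excluded_middle_informative (PI x) then true else false.

Lemma PIbP (X : fiset I) (x : fcar X) : @PIb X x <-> PI x.
Proof. by rewrite /PIb; case: excluded_middle_informative. Qed.

Definition car (X : fiset I) : finType := {x : fcar X | @PIb X x}.

Definition Frep (X : fiset I) (x : car X) : T -> T -> fcar X :=
  proj1_sig (constructive_indefinite_description _ (proj1 (PIbP (val x)) (valP x))).

Lemma Frep_spec (X : fiset I) (x : car X) :
  Inv (Frep x) /\ Frep x (mone I) (mone I) = val x.
Proof.
rewrite /Frep; by case: (constructive_indefinite_description _ _).
Qed.

Lemma Frep_uniq (X : fiset I) (x : car X) (F : T -> T -> fcar X) :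
  Uq X -> Inv F -> F (mone I) (mone I) = val x -> F = Frep x.
Proof.
move=> hU hF e; have [h1 h2] := Frep_spec x; apply: hU => //; by rewrite e h2.
Qed.

Lemma PI_val (X : fiset I) (F : T -> T -> fcar X) j k : Inv F -> @PIb X (F j k).
Proof.
move=> hF; apply/PIbP; exists (actF (j, k) F); split; first exact: Inv_act.
by rewrite /actF /= !mop1m.
Qed.

Definition mkc (X : fiset I) (F : T -> T -> fcar X) (hF : Inv F) j k : car X :=
  exist _ (F j k) (PI_val j k hF).

Definition phact (X : fiset I) (g : T * T) (x : car X) : car X :=
  mkc (proj1 (Frep_spec x)) g.1 g.2.

Lemma phact_val (X : fiset I) g (x : car X) : val (phact g x) = Frep x g.1 g.2.
Proof. by []. Qed.

Lemma Frep_act (X : fiset I) g (x : car X) : Uq X -> Frep (phact g x) = actF g (Frep x).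
Proof.
move=> hU; symmetry; apply: Frep_uniq => //; first by apply: Inv_act; case: (Frep_spec x).
by rewrite /actF !mop1m.
Qed.

Definition PhiS (X : fiset I) : gset K := @GSet K (car X) (@phact X).

Lemma Phi_is_gset (X : fiset I) : Uq X -> is_gset (PhiS X).
Proof.
move=> hU; split.
- move=> g h x e; apply: val_inj => /=.
  by apply: Inv_geqv => //; case: (Frep_spec x).
- move=> x; apply: val_inj => /=; by case: (Frep_spec x).
- move=> g h x; apply: val_inj => /=.
  change (Frep x (g.1 ** h.1) (g.2 ** h.2) = Frep (phact h x) g.1 g.2).
  by rewrite Frep_act.
Qed.

Definition Phi (X : bObj I) : GObj K :=
  exist _ (PhiS (sval X)) (Phi_is_gset (proj1 (bAct_props hc (svalP X)))).

End Phi.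

Section GIso.
Variable G : gdata.

Lemma iso_of_rel (X Y : gset G) (R : gcar X -> gcar Y -> Prop) :
  (forall x, exists y, R x y) ->
  (forall x y y', R x y -> R x y' -> y = y') ->
  (forall x x' y, R x y -> R x' y -> x = x') ->
  (forall y, exists x, R x y) ->
  (forall g x y, R x y -> R (gact X g x) (gact Y g y)) ->
  gset_iso X Y.
Proof.
move=> tot fun_ inj sur eqv.
pose f x := proj1_sig (constructive_indefinite_description _ (tot x)).
pose h y := proj1_sig (constructive_indefinite_description _ (sur y)).
have hf : forall x, R x (f x) by move=> x; rewrite /f; case: constructive_indefinite_description.
have hh : forall y, R (h y) y by move=> y; rewrite /h; case: constructive_indefinite_description.
exists f; split.
  exists h => [x|y]; first exact: inj (hh _) (hf _).
  exact: fun_ (hf _) (hh _).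
by move=> g x; apply: fun_ (hf _) _; apply: eqv.
Qed.

Lemma giso_refl (X : gset G) : gset_iso X X.
Proof. by exists id; split=> //; exists id. Qed.

Lemma giso_sym (X Y : gset G) : gset_iso X Y -> gset_iso Y X.
Proof.
case=> f [[g fg gf] hf]; exists g; split; first by exists f.
by move=> a y; apply: (can_inj fg); rewrite gf hf gf.
Qed.

Lemma giso_trans (X Y Z : gset G) : gset_iso X Y -> gset_iso Y Z -> gset_iso X Z.
Proof.
case=> f [bf hf] [g [bg hg]]; exists (g \o f); split; first exact: bij_comp.
by move=> a x /=; rewrite hf hg.
Qed.

Lemma giso_sum (X X' Y Y' : gset G) : gset_iso X X' -> gset_iso Y Y' ->
  gset_iso (gsumS X Y) (gsumS X' Y').
Proof.
case=> f [[f' f1 f2] hf] [g [[g' g1 g2] hg]].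
exists (fun s => match s with inl x => inl (f x) | inr y => inr (g y) end); split.
  exists (fun s => match s with inl x => inl (f' x) | inr y => inr (g' y) end);
  by case=> x /=; rewrite ?f1 ?f2 ?g1 ?g2.
by move=> a [x|y] /=; rewrite ?hf ?hg.
Qed.

Lemma giso_prod (X X' Y Y' : gset G) : gset_iso X X' -> gset_iso Y Y' ->
  gset_iso (gprodS X Y) (gprodS X' Y').
Proof.
case=> f [[f' f1 f2] hf] [g [[g' g1 g2] hg]].
exists (fun p => (f p.1, g p.2)); split.
  by exists (fun p => (f' p.1, g' p.2)); case=> x y /=; rewrite ?f1 ?f2 ?g1 ?g2.
by move=> a [x y] /=; rewrite hf hg.
Qed.

Lemma giso_sumC (X Y : gset G) : gset_iso (gsumS X Y) (gsumS Y X).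
Proof.
exists (fun s => match s with inl x => inr x | inr y => inl y end); split.
  by exists (fun s => match s with inl x => inr x | inr y => inl y end); case.
by move=> a [x|y].
Qed.

Lemma giso_sumA (X Y Z : gset G) : gset_iso (gsumS (gsumS X Y) Z) (gsumS X (gsumS Y Z)).
Proof.
exists (fun s => match s with inl (inl x) => inl x | inl (inr y) => inr (inl y) | inr z => inr (inr z) end); split.
  exists (fun s => match s with inl x => inl (inl x) | inr (inl y) => inl (inr y) | inr (inr z) => inr z end);
  by do ![case].
by move=> a [[x|y]|z].
Qed.

End GIso.

Section Canon.
Variable I : bs_monoid.
Variable hc : bs_commutative I.
Local Notation T := (mT I).
Local Notation "a ** b" := (mop a b) (at level 40, left associativity).
Local Notation K := (Kgroup I).

Definition canon (S : gset K) : fiset I :=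
  @FISet I (gcar S) (fun i x => gact S (mone I, i) x) (fun _ x => x).

Lemma geqv_refl (g : gT K) : geqv g g.
Proof. by exists (mone I). Qed.

Lemma canon_bAct (S : gset K) : is_gset S -> in_bAct (canon S).
Proof.
case=> h1 h2 h3; apply: bA_inv.
  split => /=.
  - by move=> x; exact: h2.
  - move=> i j x; rewrite -h3; apply: h1 => /=; exists (mone I).
    by rewrite !mop1m.
  - by move=> *.
  - by move=> *.
  - by move=> *.
left=> i; exists (fun x => gact S (i, mone I) x) => x /=; rewrite -h3 -[RHS]h2; apply: h1;
  exists (mone I) => /=; by rewrite !mop1m !mopm1.
Qed.

Lemma Inv_canon (S : gset K) (F : T -> T -> gcar S) :
  @Inv I (canon S) F <-> (forall i j k, F j (i ** k) = gact S (mone I, i) (F j k)) /\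
                          (forall i j k, F j k = F (j ** i) (k ** i)).
Proof. exact: InvE. Qed.

End Canon.

Section Main.
Variable I : bs_monoid.
Variable hc : bs_commutative I.
Local Notation T := (mT I).
Local Notation "a ** b" := (mop a b) (at level 40, left associativity).
Local Notation K := (Kgroup I).

Lemma Frep_inj (X : fiset I) (x y : car X) : Frep x = Frep y -> x = y.
Proof.
move=> e; apply: val_inj; by rewrite -(proj2 (Frep_spec x)) -(proj2 (Frep_spec y)) e.
Qed.

Lemma Frep_mkc (X : fiset I) (F : T -> T -> fcar X) (hF : Inv F) j k :
  Uq X -> Frep (mkc hc hF j k) = actF (j, k) F.
Proof.
move=> hU; symmetry; apply: Frep_uniq => //; first exact: Inv_act.
by rewrite /actF /= !mop1m.
Qed.

Lemma actF11 (A : Type) (F : T -> T -> A) : actF (mone I, mone I) F = F.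
Proof.
apply: functional_extensionality => j; apply: functional_extensionality => k.
by rewrite /actF /= !mopm1.
Qed.

Lemma Frep_mkc11 (X : fiset I) (F : T -> T -> fcar X) (hF : Inv F) :
  Uq X -> Frep (mkc hc hF (mone I) (mone I)) = F.
Proof. by move=> hU; rewrite Frep_mkc // actF11. Qed.

Lemma Ho_to_iso (A B : fiset I) : in_bAct A -> in_bAct B -> Ho_iso A B ->
  gset_iso (PhiS hc A) (PhiS hc B).
Proof.
move=> hA hB [p [q [_ _ epq eqp]]].
have [uA _] := bAct_props hc hA; have [uB _] := bAct_props hc hB.
have pq : forall F H, (exists G, rel p F G /\ rel q G H) <-> Inv F /\ F = H.
  by move=> F H; rewrite -rel_cat (rel_equiv hc epq).
have qp : forall F H, (exists G, rel q F G /\ rel p G H) <-> Inv F /\ F = H.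
  by move=> F H; rewrite -rel_cat (rel_equiv hc eqp).
have fnp : forall F G G', rel p F G -> rel p F G' -> G = G'.
  move=> F G G' h h'.
  have [F1 [h1 h2]] := proj2 (qp G' G') (conj (proj2 (rel_inv h')) erefl).
  have [_ eF] := proj1 (pq F F1) (ex_intro _ G' (conj h' h1)).
  rewrite -eF in h1.
  by have [_ ->] := proj1 (qp G' G) (ex_intro _ F (conj h1 h)).
have injp : forall F F' G, rel p F G -> rel p F' G -> F = F'.
  move=> F F' G h h'.
  have [F1 [h1 h2]] := proj2 (qp G G) (conj (proj2 (rel_inv h)) erefl).
  have [_ e1] := proj1 (pq F F1) (ex_intro _ G (conj h h1)).
  have [_ e2] := proj1 (pq F' F1) (ex_intro _ G (conj h' h1)).
  by rewrite e1 e2.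
apply: (@iso_of_rel K (PhiS hc A) (PhiS hc B) (fun (x : car A) (y : car B) => rel p (Frep x) (Frep y))).
- move=> x; have [G [h1 _]] := proj2 (pq (Frep x) (Frep x)) (conj (proj1 (Frep_spec x)) erefl).
  have hG := proj2 (rel_inv h1).
  by exists (mkc hc hG (mone I) (mone I)); rewrite Frep_mkc11.
- move=> x y y' h h'; apply: Frep_inj; exact: fnp h h'.
- move=> x x' y h h'; apply: Frep_inj; exact: injp h h'.
- move=> y; have [G [h1 h2]] := proj2 (qp (Frep y) (Frep y)) (conj (proj1 (Frep_spec y)) erefl).
  have hG := proj1 (rel_inv h2).
  by exists (mkc hc hG (mone I) (mone I)); rewrite Frep_mkc11.
- move=> g x y h /=; rewrite !(Frep_act hc) //; exact: (rel_act hc).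
Qed.


Lemma val_weq (A : fiset I) (hA : in_bAct A) :
  @is_weq I (canon (PhiS hc A)) A (fun x : car A => val x).
Proof.
have [uA _] := bAct_props hc hA.
split.
  split; [exact: canon_bAct (Phi_is_gset hc uA) | exact: hA | ].
  move=> i x /=.
  have := InvR (proj1 (Frep_spec x)) i (mone I) (mone I).
  by rewrite mopm1 (proj2 (Frep_spec x)).
split.
  move=> F G _ _ e.
  apply: functional_extensionality => j; apply: functional_extensionality => k.
  apply: val_inj; exact: (congr1 (fun f => f j k) e).
move=> H hH; exists (fun j k => mkc hc hH j k); split; last reflexivity.
apply/Inv_canon; split => i j k; apply: val_inj => /=.
  by rewrite Frep_mkc // /actF /= mop1m.
exact: (InvL hH i j k).
Qed.

Lemma canon_weq (S S' : gset K) (hS : is_gset S) (hS' : is_gset S')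
  (s : gcar S -> gcar S') (s' : gcar S' -> gcar S) :
  cancel s s' -> cancel s' s -> (forall g x, s (gact S g x) = gact S' g (s x)) ->
  @is_weq I (canon S) (canon S') s.
Proof.
move=> c1 c2 hs.
have hs' : forall g y, s' (gact S' g y) = gact S g (s' y).
  by move=> g y; apply: (can_inj c1); rewrite c2 hs c2.
split.
  split; [exact: canon_bAct | exact: canon_bAct | ].
  by move=> i x /=; rewrite hs.
split.
  move=> F G _ _ e.
  apply: functional_extensionality => j; apply: functional_extensionality => k.
  apply: (can_inj c1); exact: (congr1 (fun f => f j k) e).
move=> H /Inv_canon [h1 h2]; exists (fun j k => s' (H j k)); split.
  apply/Inv_canon; split=> i j k; first by rewrite h1 hs'.
  by rewrite -h2.
apply: functional_extensionality => j; apply: functional_extensionality => k.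
by rewrite c2.
Qed.

Lemma step_gen (X Y Z W : fiset I) (a : zz X Y) (g g' : zz Y Z) (b : zz Z W) :
  zz_gen g g' -> zz_equiv (zz_cat a (zz_cat g b)) (zz_cat a (zz_cat g' b)).
Proof. move=> h; apply: rst_step; by exists Y, Z, a, g, g', b. Qed.

Lemma iso_to_Ho (A B : fiset I) : in_bAct A -> in_bAct B ->
  gset_iso (PhiS hc A) (PhiS hc B) -> Ho_iso A B.
Proof.
move=> hA hB [s [[s' c1 c2] hs]].
have [uA _] := bAct_props hc hA; have [uB _] := bAct_props hc hB.
have gA := Phi_is_gset hc uA; have gB := Phi_is_gset hc uB.
pose CA := canon (PhiS hc A); pose CB := canon (PhiS hc B).
pose vA : fcar CA -> fcar A := fun x => val x.
pose vB : fcar CB -> fcar B := fun x => val x.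
have wA : @is_weq I CA A vA := val_weq hA.
have wB : @is_weq I CB B vB := val_weq hB.
have ws : @is_weq I CA CB s := canon_weq gA gB c1 c2 hs.
exists (@zz_bwd I A CA B vA (@zz_fwd I CA CB B s (@zz_fwd I CB B B vB (zz_nil B)))).
exists (@zz_bwd I B CB A vB (@zz_bwd I CB CA A s (@zz_fwd I CA A A vA (zz_nil A)))).
split.
- split; first exact: wA. split; first exact: (proj1 ws).
  split; [exact: (proj1 wB) | exact: hB].
- split; first exact: wB. split; first exact: ws.
  split; [exact: (proj1 wA) | exact: hA].
- apply: rst_trans.
    exact: (step_gen (@zz_bwd I A CA CB vA (@zz_fwd I CA CB CB s (zz_nil CB)))
                     (@zz_bwd I CB CA A s (@zz_fwd I CA A A vA (zz_nil A))) (zg_wl wB)).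
  apply: rst_trans.
    exact: (step_gen (@zz_bwd I A CA CA vA (zz_nil CA))
                     (@zz_fwd I CA A A vA (zz_nil A)) (zg_wl ws)).
  exact: (step_gen (zz_nil A) (zz_nil A) (zg_wr wA)).
- apply: rst_trans.
    exact: (step_gen (@zz_bwd I B CB CA vB (@zz_bwd I CB CA CA s (zz_nil CA)))
                     (@zz_fwd I CA CB B s (@zz_fwd I CB B B vB (zz_nil B))) (zg_wl wA)).
  apply: rst_trans.
    exact: (step_gen (@zz_bwd I B CB CB vB (zz_nil CB))
                     (@zz_fwd I CB B B vB (zz_nil B)) (zg_wr ws)).
  exact: (step_gen (zz_nil B) (zz_nil B) (zg_wr wB)).
Qed.

End Main.

Section Struct.
Variable I : bs_monoid.
Variable hc : bs_commutative I.
Local Notation T := (mT I).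
Local Notation "a ** b" := (mop a b) (at level 40, left associativity).
Local Notation K := (Kgroup I).

Lemma Phi_sum (X Y : fiset I) : in_bAct X -> in_bAct Y ->
  gset_iso (PhiS hc (sumI X Y)) (gsumS (PhiS hc X) (PhiS hc Y)).
Proof.
move=> hX hY.
have [uS _] := bAct_props hc (bA_sum hX hY).
have [uX _] := bAct_props hc hX; have [uY _] := bAct_props hc hY.
apply: (@iso_of_rel K (PhiS hc (sumI X Y)) (gsumS (PhiS hc X) (PhiS hc Y))
  (fun (x : car (sumI X Y)) (s : car X + car Y) =>
     match s with inl a => val x = inl (val a) | inr b => val x = inr (val b) end)).
- move=> x; have [hF eF] := Frep_spec x.
  case: (Inv_sum_split hF) => [[F' [hF' e]]|[F' [hF' e]]].
  + exists (inl (mkc hc hF' (mone I) (mone I))) => /=; by rewrite -eF e.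
  + exists (inr (mkc hc hF' (mone I) (mone I))) => /=; by rewrite -eF e.
- move=> x [a|b] [a'|b'] //=.
  + by move=> -> [e]; congr inl; apply: val_inj.
  + by move=> ->.
  + by move=> ->.
  + by move=> -> [e]; congr inr; apply: val_inj.
- move=> x x' [a|b] /= e1 e2; apply: val_inj; exact: (etrans e1 (esym e2)).
- case=> [a|b].
  + have [hF eF] := Frep_spec a.
    have hF' := proj1 (@Inv_inl I X Y _) hF.
    by exists (mkc hc hF' (mone I) (mone I)) => /=; rewrite eF.
  + have [hF eF] := Frep_spec b.
    have hF' := proj1 (@Inv_inr I X Y _) hF.
    by exists (mkc hc hF' (mone I) (mone I)) => /=; rewrite eF.
- move=> g x [a|b] /= e.
  + have hF' := proj1 (@Inv_inl I X Y _) (proj1 (Frep_spec a)).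
    have -> : Frep x = (fun j k => inl (Frep a j k)).
      symmetry; apply: Frep_uniq => //; rewrite (proj2 (Frep_spec a)); exact: (esym e).
    by [].
  + have hF' := proj1 (@Inv_inr I X Y _) (proj1 (Frep_spec b)).
    have -> : Frep x = (fun j k => inr (Frep b j k)).
      symmetry; apply: Frep_uniq => //; rewrite (proj2 (Frep_spec b)); exact: (esym e).
    by [].
Qed.


Lemma Phi_prod (X Y : fiset I) : in_bAct X -> in_bAct Y ->
  gset_iso (PhiS hc (prodI X Y)) (gprodS (PhiS hc X) (PhiS hc Y)).
Proof.
move=> hX hY.
have [uS _] := bAct_props hc (bA_prod hX hY).
apply: (@iso_of_rel K (PhiS hc (prodI X Y)) (gprodS (PhiS hc X) (PhiS hc Y))
  (fun (x : car (prodI X Y)) (p : car X * car Y) => val x = (val p.1, val p.2))).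
- move=> x; have [hF eF] := Frep_spec x.
  have [h1 h2] := proj1 (Inv_prod (Frep x)) hF.
  exists (mkc hc h1 (mone I) (mone I), mkc hc h2 (mone I) (mone I)) => /=.
  by rewrite -eF; case: (Frep x _ _).
- move=> x [a b] [a' b'] /= -> [e1 e2].
  by congr pair; apply: val_inj.
- move=> x x' [a b] /= e1 e2; apply: val_inj; exact: (etrans e1 (esym e2)).
- case=> a b.
  have hF : Inv (fun j k => (Frep a j k, Frep b j k) : fcar (prodI X Y)).
    apply/Inv_prod; split; [exact: (proj1 (Frep_spec a)) | exact: (proj1 (Frep_spec b))].
  by exists (mkc hc hF (mone I) (mone I)) => /=; rewrite (proj2 (Frep_spec a)) (proj2 (Frep_spec b)).
- move=> g x [a b] /= e.
  have hF : Inv (fun j k => (Frep a j k, Frep b j k) : fcar (prodI X Y)).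
    apply/Inv_prod; split; [exact: (proj1 (Frep_spec a)) | exact: (proj1 (Frep_spec b))].
  have -> : Frep x = (fun j k => (Frep a j k, Frep b j k)).
    symmetry; apply: Frep_uniq => //.
    rewrite (proj2 (Frep_spec a)) (proj2 (Frep_spec b)); exact: (esym e).
  by [].
Qed.

Lemma Phi_point : gset_iso (PhiS hc (pointI I)) (gpointS K).
Proof.
have hF : Inv (fun _ _ => tt : fcar (pointI I)) by apply/InvE.
apply: (@iso_of_rel K (PhiS hc (pointI I)) (gpointS K) (fun _ _ => True)).
- by move=> x; exists tt.
- by move=> x [] [].
- move=> x x' _ _ _; apply: val_inj; by case: (val x); case: (val x').
- by move=> y; exists (mkc hc hF (mone I) (mone I)).
- by [].
Qed.

Lemma Phi_empty : gset_iso (PhiS hc (emptyI I)) (gemptyS K).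
Proof.
apply: (@iso_of_rel K (PhiS hc (emptyI I)) (gemptyS K) (fun _ _ => True)).
- by move=> x; case: (val x).
- by move=> x; case: (val x).
- by move=> x; case: (val x).
- by case.
- by move=> g x; case: (val x).
Qed.

Lemma Phi_canon (S : gset K) (hS : is_gset S) : gset_iso (PhiS hc (canon S)) S.
Proof.
have hB := canon_bAct hS; have [uS _] := bAct_props hc hB.
case: hS => h1 h2 h3.
have Fcan : forall y : gcar S, @Inv I (canon S) (fun j k => gact S (j, k) y).
  move=> y; apply/Inv_canon; split=> i j k.
    by rewrite -h3 /= mop1m.
  apply: h1; exists (mone I) => /=; rewrite !mopm1.
  by rewrite (hc k i) mopA.
have Frep_can : forall x : car (canon S), Frep x = (fun j k => gact S (j, k) (val x)).
  move=> x; symmetry; apply: Frep_uniq => //; exact: h2.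
apply: (@iso_of_rel K (PhiS hc (canon S)) S (fun (x : car (canon S)) y => val x = y)).
- by move=> x; exists (val x).
- by move=> x y y' <- <-.
- by move=> x x' y e1 e2; apply: val_inj; rewrite e1 e2.
- move=> y; exists (mkc hc (Fcan y) (mone I) (mone I)) => /=; exact: h2.
- move=> g x y /= <-; rewrite Frep_can; by case: g.
Qed.

End Struct.

Section Final.
Variable I : bs_monoid.
Variable hc : bs_commutative I.
Local Notation K := (Kgroup I).

Lemma reqv_of (x1 x2 : GObj K) (y : GObj K * GObj K) : gset_iso (sval x1) (sval y.1) ->
  gset_iso (sval x2) (sval y.2) -> @reqv (BurnsideGroup K) (x1, x2) y.
Proof.
case: y => y1 y2 /= h1 h2; exists x1 => /=.
apply: giso_sum (giso_refl _); exact: giso_sum h1 (giso_sym h2).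
Qed.

Lemma Phi_sum3 (A B C : fiset I) : in_bAct A -> in_bAct B -> in_bAct C ->
  gset_iso (PhiS hc (sumI (sumI A B) C)) (gsumS (gsumS (PhiS hc A) (PhiS hc B)) (PhiS hc C)).
Proof.
move=> hA hB hC; apply: giso_trans (Phi_sum hc (bA_sum hA hB) hC) _.
exact: giso_sum (Phi_sum hc hA hB) (giso_refl _).
Qed.

Definition canonObj (S : GObj K) : bObj I := exist _ (canon (sval S)) (canon_bAct (svalP S)).

End Final.

Theorem mainTheorem14 (I : bs_monoid) :
  bs_commutative I ->
  ring_isomorphic (BurnsideMonoid I) (BurnsideGroup (Kgroup I)).
Proof.
move=> hc.
exists (fun a : bObj I * bObj I => (Phi hc a.1, Phi hc a.2)); split.
- move=> [a1 a2] [b1 b2]; split.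
  + case=> k /= H; exists (Phi hc k) => /=.
    have H' := Ho_to_iso hc (bA_sum (bA_sum (svalP a1) (svalP b2)) (svalP k))
                            (bA_sum (bA_sum (svalP b1) (svalP a2)) (svalP k)) H.
    apply: giso_trans (giso_sym (Phi_sum3 hc (svalP a1) (svalP b2) (svalP k))) _.
    apply: giso_trans H' _.
    exact: (Phi_sum3 hc (svalP b1) (svalP a2) (svalP k)).
  + case=> k' /= H; exists (canonObj k') => /=.
    apply: (@iso_to_Ho I hc _ _ (bA_sum (bA_sum (svalP a1) (svalP b2)) (canon_bAct (svalP k')))
                         (bA_sum (bA_sum (svalP b1) (svalP a2)) (canon_bAct (svalP k')))).
    apply: giso_trans (Phi_sum3 hc (svalP a1) (svalP b2) (canon_bAct (svalP k'))) _.
    apply: giso_trans (giso_sum (giso_refl _) (Phi_canon hc (svalP k'))) _.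
    apply: giso_trans H _.
    apply: giso_trans (giso_sym (giso_sum (giso_refl _) (Phi_canon hc (svalP k')))) _.
    exact: giso_sym (Phi_sum3 hc (svalP b1) (svalP a2) (canon_bAct (svalP k'))).
- move=> [s1 s2]; exists (canonObj s1, canonObj s2).
  apply: reqv_of => /=; [exact: (Phi_canon hc (svalP s1)) | exact: (Phi_canon hc (svalP s2))].
- move=> [a1 a2] [b1 b2].
  apply: reqv_of => /=; [exact: (Phi_sum hc (svalP a1) (svalP b1)) | exact: (Phi_sum hc (svalP a2) (svalP b2))].
- move=> [a1 a2] [b1 b2].
  apply: reqv_of => /=.
  + apply: giso_trans (Phi_sum hc (bA_prod (svalP a1) (svalP b1)) (bA_prod (svalP a2) (svalP b2))) _.
    exact: giso_sum (Phi_prod hc (svalP a1) (svalP b1)) (Phi_prod hc (svalP a2) (svalP b2)).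
  + apply: giso_trans (Phi_sum hc (bA_prod (svalP a1) (svalP b2)) (bA_prod (svalP a2) (svalP b1))) _.
    exact: giso_sum (Phi_prod hc (svalP a1) (svalP b2)) (Phi_prod hc (svalP a2) (svalP b1)).
- apply: reqv_of => /=; [exact: (Phi_point hc) | exact: (Phi_empty hc)].
Qed.
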